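(* Let $\mathcal P$ be a non-degenerate polar space of finite rank $n\ge2$ with no thin lines, and let $H$ be a hyperplane of $\mathcal P$ which, as a polar space, is non-degenerate of rank $n$. Then $S_n(H)$ generates the dual polar space $\mathcal P_n$; consequently $\mathrm{gr}(\mathcal P_n)\le\mathrm{gr}(H_n)$.
   Context: $\mathcal P$ is a point-line geometry (polar space); a subspace is a set of points containing every line meeting it in $\ge2$ points; a hyperplane is a proper subspace meeting every line. Singular subspaces (pairwise collinear subspaces) are projective spaces; a $k$-subspace is a singular subspace of projective rank $k$ (dimension $k-1$); $S_k(\mathcal P)$ is their set and $S_k(H)$ the set of those contained in $H$. The dual polar space $\mathcal P_n$ has points $S_n(\mathcal P)$ and lines $\{Z\in S_n(\mathcal P):Z\supset X\}$ for $X\in S_{n-1}(\mathcal P)$; $H_n$ is the dual polar space of $H$. A set generates a geometry if the smallest subspace containing it is everything; $\mathrm{gr}$ is the minimum size of a generating set. *)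

(* Defs.v *)
From Stdlib Require Import Arith.

Section Geometry.
(* A point-line geometry: a type of points [Pt], a point set [D] (the
   "universe" of the geometry, so that induced geometries such as a
   hyperplane can be treated uniformly), and a predicate [Ln] on sets of
   points selecting the lines. *)
Context {Pt : Type} (Ln : (Pt -> Prop) -> Prop) (D : Pt -> Prop).

Definition subset (A B : Pt -> Prop) : Prop := forall x, A x -> B x.

Definition lineIn (L : Pt -> Prop) : Prop := Ln L /\ subset L D.

Definition collinear (x y : Pt) : Prop :=
  x = y \/ exists L, lineIn L /\ L x /\ L y.

(* partial linear space + Buekenhout-Shult one-or-all axiom *)
Definition polar_space : Prop :=
  (forall L, lineIn L -> exists x y, x <> y /\ L x /\ L y) /\
  (forall L M x y, lineIn L -> lineIn M -> x <> y ->
      L x -> L y -> M x -> M y -> forall z, L z <-> M z) /\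
  (forall p L, D p -> lineIn L ->
      (forall x, L x -> collinear p x) \/
      (exists x, (L x /\ collinear p x) /\
                 forall y, L y /\ collinear p y -> y = x)).

Definition nondegenerate : Prop :=
  forall x, D x -> exists y, D y /\ ~ collinear x y.

Definition no_thin_lines : Prop :=
  forall L, lineIn L -> exists x y z, L x /\ L y /\ L z /\
                         x <> y /\ x <> z /\ y <> z.

Definition subspace (S : Pt -> Prop) : Prop :=
  subset S D /\
  forall L, lineIn L ->
    (exists x y, x <> y /\ L x /\ L y /\ S x /\ S y) -> subset L S.

Definition singular (S : Pt -> Prop) : Prop :=
  subspace S /\ forall x y, S x -> S y -> collinear x y.

Definition hyperplane (H : Pt -> Prop) : Prop :=
  subspace H /\ (exists x, D x /\ ~ H x) /\
  forall L, lineIn L -> exists x, L x /\ H x.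

Definition has_chain (X : Pt -> Prop) (k : nat) : Prop :=
  exists f : nat -> Pt -> Prop,
    (forall x, ~ f 0 x) /\ (forall x, f k x <-> X x) /\
    (forall i, i <= k -> subspace (f i)) /\
    (forall i, i < k -> subset (f i) (f (S i)) /\
                        exists x, f (S i) x /\ ~ f i x).

(* X is a singular subspace of projective rank k (dimension k-1):
   the maximal length of a chain of subspaces inside X is k *)
Definition k_subspace (k : nat) (X : Pt -> Prop) : Prop :=
  singular X /\ has_chain X k /\ ~ has_chain X (S k).

Definition has_rank (n : nat) : Prop :=
  (exists X, k_subspace n X) /\
  forall X k, singular X -> has_chain X k -> k <= n.

Definition generates (A : Pt -> Prop) : Prop :=
  subset A D /\ forall S, subspace S -> subset A S -> subset D S.

End Geometry.

Definition dual_points {Pt : Type} (Ln : (Pt -> Prop) -> Prop) (D : Pt -> Prop)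
  (n : nat) : (Pt -> Prop) -> Prop := k_subspace Ln D n.

Definition dual_lines {Pt : Type} (Ln : (Pt -> Prop) -> Prop) (D : Pt -> Prop)
  (n : nat) : ((Pt -> Prop) -> Prop) -> Prop :=
  fun Lam => exists X, k_subspace Ln D (n - 1) X /\
    forall Z, Lam Z <-> (k_subspace Ln D n Z /\ subset X Z).

Definition card_le {T : Type} (B A : T -> Prop) : Prop :=
  exists f : T -> T, (forall x, B x -> A (f x)) /\
    (forall x y, B x -> B y -> f x = f y -> x = y).

(* Main.v *)
Require Import Defs.
From Stdlib Require Import Arith Lia Classical.

Section Gen.
Context {Pt : Type} (Ln : (Pt -> Prop) -> Prop) (D : Pt -> Prop).
Hypothesis PS : polar_space Ln D.

Local Notation coll := (collinear Ln D).
Local Notation sub := (subspace Ln D).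
Local Notation chain := (has_chain Ln D).
Local Notation lin := (lineIn Ln D).

Definition cge (X : Pt -> Prop) k := exists j, k <= j /\ chain X j.
Definition rb (X : Pt -> Prop) k := forall j, chain X j -> j <= k.
Definition inter (A B : Pt -> Prop) := fun x => A x /\ B x.
Definition pp (p : Pt) := fun y => D y /\ coll p y.
Definition perp (A : Pt -> Prop) := fun y => D y /\ forall x, A x -> coll x y.
Definition span (A : Pt -> Prop) := fun y => forall S, sub S -> subset A S -> S y.
Definition add (A : Pt -> Prop) (p : Pt) := fun y => A y \/ y = p.

Lemma coll_refl x : coll x x.
Proof. left; reflexivity. Qed.

Lemma coll_sym x y : coll x y -> coll y x.
Proof. intros [->|[L [HL [Hx Hy]]]]; [left; reflexivity| right; exists L; auto]. Qed.

Lemma coll_line x y : coll x y -> x <> y -> exists L, lin L /\ L x /\ L y.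
Proof. intros [->|H] Hn; [congruence|exact H]. Qed.

Lemma lin_D L x : lin L -> L x -> D x.
Proof. intros [_ HL] Hx; exact (HL x Hx). Qed.

Lemma oa_two p L a b : D p -> lin L -> L a -> L b -> a <> b -> coll p a -> coll p b ->
  forall x, L x -> coll p x.
Proof.
  intros Dp HL La Lb Hab ca cb.
  destruct PS as [_ [_ P3]].
  destruct (P3 p L Dp HL) as [H|[x [[Lx cx] U]]]; auto.
  exfalso. apply Hab. rewrite (U a (conj La ca)), (U b (conj Lb cb)); reflexivity.
Qed.

Lemma oa_one p L : D p -> lin L -> exists x, L x /\ coll p x.
Proof.
  intros Dp HL. destruct PS as [P1 [_ P3]].
  destruct (P3 p L Dp HL) as [H|[x [[Lx cx] U]]].
  - destruct (P1 L HL) as [x [y [_ [Lx _]]]]. exists x; auto.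
  - exists x; auto.
Qed.

Lemma oa_uniq p L x : D p -> lin L -> L x -> ~ coll p x ->
  exists u, L u /\ coll p u /\ forall y, L y -> coll p y -> y = u.
Proof.
  intros Dp HL Lx nc. destruct PS as [_ [_ P3]].
  destruct (P3 p L Dp HL) as [H|[u [[Lu cu] U]]].
  - exfalso; apply nc; auto.
  - exists u; repeat split; auto.
Qed.

Lemma sub_ext A B : sub A -> (forall x, A x <-> B x) -> sub B.
Proof.
  intros [HA1 HA2] E. split.
  - intros x Bx. apply HA1, E, Bx.
  - intros L HL [x [y [nxy [Lx [Ly [Bx By]]]]]] z Lz.
    apply E. apply (HA2 L HL); [|exact Lz].
    exists x, y; repeat split; auto; apply E; auto.
Qed.

Lemma sub_D : sub D.
Proof. split; [intros x h; exact h| intros L [_ HL] _; exact HL]. Qed.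

Lemma sub_empty : sub (fun _ => False).
Proof. split; [intros x []| intros L _ [x [y [_ [_ [_ [[] _]]]]]]]. Qed.

Lemma sub_inter A B : sub A -> sub B -> sub (inter A B).
Proof.
  intros [A1 A2] [B1 B2]. split.
  - intros x [Ax _]; auto.
  - intros L HL [x [y [nxy [Lx [Ly [[Ax Bx] [Ay By]]]]]]] z Lz. split.
    + apply (A2 L HL); [exists x, y; auto|auto].
    + apply (B2 L HL); [exists x, y; auto|auto].
Qed.

Lemma sub_D_of A x : sub A -> A x -> D x.
Proof. intros [h _] ax; exact (h x ax). Qed.

Lemma sub_line A L x y : sub A -> lin L -> x <> y -> L x -> L y -> A x -> A y ->
  forall z, L z -> A z.
Proof. intros [_ h] HL nxy Lx Ly Ax Ay z Lz. apply (h L HL); [exists x, y; auto|auto]. Qed.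

Lemma pp_sub p : D p -> sub (pp p).
Proof.
  intros Dp. split.
  - intros x [h _]; exact h.
  - intros L HL [x [y [nxy [Lx [Ly [[_ cx] [_ cy]]]]]]] z Lz. split.
    + exact (lin_D L z HL Lz).
    + exact (oa_two p L x y Dp HL Lx Ly nxy cx cy z Lz).
Qed.

Lemma perp_sub A : subset A D -> sub (perp A).
Proof.
  intros AD. split.
  - intros x [h _]; exact h.
  - intros L HL [x [y [nxy [Lx [Ly [[_ cx] [_ cy]]]]]]] z Lz. split.
    + exact (lin_D L z HL Lz).
    + intros a Aa. exact (oa_two a L x y (AD a Aa) HL Lx Ly nxy (cx a Aa) (cy a Aa) z Lz).
Qed.

Lemma span_incl A : subset A (span A).
Proof. intros x Ax S _ HS; exact (HS x Ax). Qed.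

Lemma span_min A S : sub S -> subset A S -> subset (span A) S.
Proof. intros HS HAS x Hx; exact (Hx S HS HAS). Qed.

Lemma span_sub A : subset A D -> sub (span A).
Proof.
  intros AD. split.
  - intros x Hx. exact (Hx D sub_D AD).
  - intros L HL [x [y [nxy [Lx [Ly [Sx Sy]]]]]] z Lz S HS HAS.
    exact (sub_line S L x y HS HL nxy Lx Ly (Sx S HS HAS) (Sy S HS HAS) z Lz).
Qed.

Lemma sing_span A : subset A D -> (forall x y, A x -> A y -> coll x y) -> singular Ln D (span A).
Proof.
  intros AD Hc. split; [apply span_sub; auto|].
  assert (H1 : forall u, span A u -> forall x, A x -> coll x u).
  { intros u Hu x Ax.
    assert (pp x u). { apply (span_min A (pp x)); auto. apply pp_sub; auto.
      intros y Ay; split; auto. }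
    destruct H; auto. }
  intros u v Hu Hv.
  assert (Du : D u) by exact (Hu D sub_D AD).
  assert (pp u v). { apply (span_min A (pp u)); auto. apply pp_sub; auto.
      intros y Ay; split; auto. apply coll_sym; auto. }
  destruct H; auto.
Qed.

Lemma coll_span A z : D z -> (forall a, A a -> coll z a) -> forall y, span A y -> coll z y.
Proof.
  intros Dz H y Hy. assert (pp z y).
  { apply Hy. apply pp_sub; auto. intros a Aa; split; auto.
    destruct (H a Aa) as [<-|[L [HL [_ La]]]]; auto. exact (lin_D L a HL La). }
  destruct H0; auto.
Qed.


Lemma fchain_mono (f : nat -> Pt -> Prop) k :
  (forall i, i < k -> subset (f i) (f (S i))) ->
  forall i j, i <= j -> j <= k -> subset (f i) (f j).
Proof.
  intros Hinc i j Hij. induction Hij; intros Hk x Hx; auto.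
  apply (Hinc m); [lia|]. apply IHHij; [lia|auto].
Qed.

Lemma chain_ext A B k : chain A k -> (forall x, A x <-> B x) -> chain B k.
Proof.
  intros [f [H0 [Hk [Hs Hi]]]] E. exists f; split; [|split; [|split]]; auto.
  intros x; split; intros h; [apply E, Hk, h| apply Hk, E, h].
Qed.

Lemma chain_sub A k : chain A k -> sub A.
Proof.
  intros [f [H0 [Hk [Hs Hi]]]]. apply (sub_ext (f k)); auto.
Qed.

Lemma chain_empty A : (forall x, ~ A x) -> chain A 0.
Proof.
  intros HA. exists (fun _ _ => False). split; [|split; [|split]].
  - intros x []. 
  - intros x; split; [intros []| intros Ax; exact (HA x Ax)].
  - intros i _; apply sub_empty.
  - intros i Hi; lia.
Qed.

Lemma chain0_empty A : chain A 0 -> forall x, ~ A x.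
Proof. intros [f [H0 [Hk _]]] x Ax. apply (H0 x), Hk, Ax. Qed.

Lemma chain_extend A B k x : chain A k -> sub B -> subset A B -> B x -> ~ A x -> chain B (S k).
Proof.
  intros [f [H0 [Hk [Hs Hi]]]] HB HAB Bx nAx.
  exists (fun i => if Nat.leb i k then f i else B). split; [|split; [|split]].
  - simpl. apply H0.
  - intros y. rewrite (proj2 (Nat.leb_gt (S k) k) ltac:(lia)). tauto.
  - intros i Hi0. destruct (Nat.leb i k) eqn:E; auto. apply Hs. apply Nat.leb_le in E; lia.
  - intros i Hi0. rewrite (proj2 (Nat.leb_le i k) ltac:(lia)).
    destruct (Nat.leb (S i) k) eqn:E.
    + apply Nat.leb_le in E. apply (Hi i); lia.
    + apply Nat.leb_gt in E. assert (i = k) by lia. subst i. split.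
      * intros y Hy. apply HAB, Hk, Hy.
      * exists x; split; auto. intros Hf; apply nAx, Hk, Hf.
Qed.

Lemma chain_prefix X k : chain X (S k) ->
  exists Y, sub Y /\ subset Y X /\ chain Y k /\ exists b, X b /\ ~ Y b.
Proof.
  intros [f [H0 [Hk [Hs Hi]]]]. exists (f k). split; [|split; [|split]].
  - apply Hs; lia.
  - intros x Hx. apply Hk. apply (Hi k); auto.
  - exists f; split; [exact H0|split; [intros x; tauto|split]].
    + intros i Hi'; apply Hs; lia.
    + intros i Hi'; apply Hi; lia.
  - destruct (Hi k ltac:(lia)) as [_ [b [Hb nb]]]. exists b; split; auto. apply Hk; auto.
Qed.

Lemma chain_cge A k : chain A k -> cge A k.
Proof. intros h; exists k; split; auto. Qed.

Lemma cge_mono A B k : cge A k -> sub B -> subset A B -> cge B k.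
Proof.
  intros [j [hj ch]] HB HAB.
  destruct (classic (exists x, B x /\ ~ A x)) as [[x [Bx nAx]]|nE].
  - exists (S j); split; [lia|]. apply (chain_extend A B j x); auto.
  - exists j; split; auto. apply (chain_ext A); auto. intros x; split; auto.
    intros Bx. apply NNPP. intros nAx. apply nE. exists x; auto.
Qed.

Lemma cge_step A B k x : cge A k -> sub B -> subset A B -> B x -> ~ A x -> cge B (S k).
Proof.
  intros [j [hj ch]] HB HAB Bx nAx. exists (S j); split; [lia|].
  apply (chain_extend A B j x); auto.
Qed.

Lemma cge_exact A k : cge A k -> rb A k -> chain A k.
Proof.
  intros [j [hj ch]] r. assert (j <= k) by (apply r; auto).
  assert (j = k) by lia. subst; auto.
Qed.

Lemma rb_mono A B k : rb B k -> sub B -> subset A B -> rb A k.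
Proof.
  intros r HB HAB j ch. destruct (cge_mono A B j (chain_cge A j ch) HB HAB) as [j' [h1 h2]].
  specialize (r j' h2). lia.
Qed.

Lemma rb_strict A B k x : rb B (S k) -> sub B -> subset A B -> B x -> ~ A x -> rb A k.
Proof.
  intros r HB HAB Bx nAx j ch. specialize (r (S j) (chain_extend A B j x ch HB HAB Bx nAx)). lia.
Qed.

Lemma eq_top A B k : sub B -> subset A B -> cge A k -> rb B k -> subset B A.
Proof.
  intros HB HAB c r x Bx. apply NNPP. intros nAx.
  destruct (cge_step A B k x c HB HAB Bx nAx) as [j [hj ch]].
  specialize (r j ch). lia.
Qed.

Lemma L1 (G S0 : Pt -> Prop) : sub G -> singular Ln D S0 ->
  (forall L, lin L -> subset L S0 -> exists x, L x /\ G x) ->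
  forall k U, sub U -> subset U S0 -> chain U k -> cge (inter U G) (k - 1).
Proof.
  intros HG [HS0 cS0] Hmeet k. induction k as [|k IH]; intros U HS SS0 ch.
  - exists 0; split; auto. apply chain_empty. intros x [Ux _].
    exact (chain0_empty U ch x Ux).
  - destruct (chain_prefix U k ch) as [Y [HY [YS [chY [b [Sb nYb]]]]]].
    assert (HSG : sub (inter U G)) by (apply sub_inter; auto).
    destruct (classic (forall x, Y x -> G x)) as [YG|nYG].
    + replace (S k - 1) with k by lia.
      apply (cge_mono Y); auto. apply chain_cge; auto.
      intros x Yx; split; auto.
    + apply not_all_ex_not in nYG. destruct nYG as [a nYa].
      apply imply_to_and in nYa. destruct nYa as [Ya nGa].
      destruct k as [|k'].
      { exfalso. exact (chain0_empty Y chY a Ya). }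
      assert (IHc : cge (inter Y G) (S k' - 1)).
      { apply IH; auto. intros x Yx; apply SS0, YS, Yx. }
      destruct (classic (exists z, U z /\ G z /\ ~ Y z)) as [[z [Sz [Gz nYz]]]|nz].
      * replace (S (S k') - 1) with (S (S k' - 1)) by lia.
        apply (cge_step (inter Y G) (inter U G) _ z); auto.
        -- intros x [Yx Gx]; split; auto.
        -- split; auto.
        -- intros [Yz _]; auto.
      * exfalso.
        assert (nab : a <> b) by (intros ->; auto).
        assert (Sa : U a) by auto.
        destruct (coll_line a b (cS0 a b (SS0 a Sa) (SS0 b Sb)) nab) as [L [HL [La Lb]]].
        assert (LS : subset L U) by (intros z Lz; exact (sub_line U L a b HS HL nab La Lb Sa Sb z Lz)).
        destruct (Hmeet L HL (fun z Lz => SS0 z (LS z Lz))) as [c [Lc Gc]].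
        assert (Yc : Y c). { apply NNPP; intros nYc; apply nz; exists c; auto. }
        assert (nac : a <> c) by (intros ->; auto).
        apply nYb. exact (sub_line Y L a c HY HL nac La Lc Ya Yc b Lb).
Qed.


Lemma meet_pp x (S0 : Pt -> Prop) : D x -> forall L, lin L -> subset L S0 -> exists y, L y /\ pp x y.
Proof.
  intros Dx L HL _. destruct (oa_one x L Dx HL) as [y [Ly cy]]. exists y; split; auto.
  split; auto. exact (lin_D L y HL Ly).
Qed.

Lemma coll_L L x y : lin L -> L x -> L y -> coll x y.
Proof.
  intros HL Lx Ly. destruct (classic (x = y)) as [->|nxy]; [apply coll_refl|].
  right; exists L; auto.
Qed.

Lemma sing_sub Z A : singular Ln D Z -> sub A -> subset A Z -> singular Ln D A.
Proof. intros [_ c] HA AZ. split; auto. Qed.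

Lemma perp_D K x : perp K x -> D x.
Proof. intros [h _]; exact h. Qed.

Hypothesis ND : nondegenerate Ln D.

Lemma Res : forall r K, singular Ln D K -> chain K r -> rb K r ->
  forall a, perp K a -> ~ K a -> exists R, perp K R /\ ~ coll a R.
Proof.
  induction r as [|r IH]; intros K sK chK rbK a pa nKa.
  - destruct (ND a (perp_D K a pa)) as [y [Dy ny]]. exists y; split; auto.
    split; auto. intros x Kx. exfalso; exact (chain0_empty K chK x Kx).
  - destruct (chain_prefix K r chK) as [K' [sK' [K'K [chK' [k [Kk nK'k]]]]]].
    assert (subK : sub K) by (destruct sK; auto).
    assert (rbK' : rb K' r) by (apply (rb_strict K' K r k); auto).
    assert (sgK' : singular Ln D K') by (apply (sing_sub K); auto).
    assert (Dk : D k) by (apply (sub_D_of K); auto).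
    assert (addD : subset (add K' k) D).
    { intros e [He| ->]; auto. apply (sub_D_of K'); auto. }
    assert (Kspan : forall z, K z -> span (add K' k) z).
    { apply (eq_top _ K (S r)); auto.
      - apply span_min; auto. intros e [He| ->]; auto.
      - apply (cge_step K' _ r k); auto.
        + exists r; split; auto.
        + apply span_sub; auto.
        + intros e He. apply span_incl. left; auto.
        + apply span_incl. right; auto. }
    apply NNPP. intros Hno.
    assert (Hall : forall R, perp K R -> coll a R).
    { intros R pR. apply NNPP. intros nc. apply Hno. exists R; auto. }
    assert (Da : D a) by exact (perp_D K a pa).
    assert (pK'a : perp K' a) by (split; auto; intros x Hx; apply (proj2 pa); auto).
    assert (pK'k : perp K' k) by (split; auto; intros x Hx; apply (proj2 sK); auto).
    assert (nK'a : ~ K' a) by auto.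
    assert (subP : sub (perp K')) by (apply perp_sub; intros x Hx; apply (sub_D_of K'); auto).
    destruct (IH K' sgK' chK' rbK' k pK'k nK'k) as [Q [pQ nkQ]].
    assert (DQ : D Q) by exact (perp_D K' Q pQ).
    assert (cka : coll k a) by (apply (proj2 pa); auto).
    assert (nka : k <> a) by (intros ->; auto).
    destruct (coll_line k a cka nka) as [l [Hl [lk la]]].
    destruct (oa_uniq Q l k DQ Hl lk (fun h => nkQ (coll_sym _ _ h))) as [A [lA [cQA uA]]].
    assert (pA : perp K' A) by exact (sub_line _ l k a subP Hl nka lk la pK'k pK'a A lA).
    assert (nAk : A <> k). { intros ->. apply nkQ, coll_sym; auto. }
    assert (nK'A : ~ K' A).
    { intros K'A. apply nKa. apply (sub_line K l A k subK Hl nAk lA lk); auto. }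
    destruct (IH K' sgK' chK' rbK' A pA nK'A) as [R [pR nAR]].
    assert (DR : D R) by exact (perp_D K' R pR).
    destruct (oa_uniq R l A DR Hl lA (fun h => nAR (coll_sym _ _ h))) as [B [lB [cRB uB]]].
    assert (nAB : A <> B). { intros ->. apply nAR, coll_sym; auto. }
    assert (nQA : Q <> A). { intros ->. apply nkQ. apply (coll_L l); auto. }
    destruct (coll_line Q A cQA nQA) as [m [Hm [mQ mA]]].
    destruct (oa_uniq R m A DR Hm mA (fun h => nAR (coll_sym _ _ h))) as [C [mC [cRC uC]]].
    assert (nCA : C <> A). { intros ->. apply nAR, coll_sym; auto. }
    assert (nRC : R <> C). { intros ->. apply nAR. apply (coll_L m); auto. }
    destruct (coll_line R C cRC nRC) as [N [HN [NR NC]]].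
    destruct (oa_one k N Dk HN) as [Dp [NDp ckD]].
    assert (pC : perp K' C) by exact (sub_line _ m Q A subP Hm nQA mQ mA pQ pA C mC).
    assert (pD : perp K' Dp) by exact (sub_line _ N R C subP HN nRC NR NC pR pC Dp NDp).
    assert (DDp : D Dp) by exact (perp_D K' Dp pD).
    assert (pKD : perp K Dp).
    { split; auto. intros z Kz. apply coll_sym.
      apply (coll_span (add K' k) Dp DDp); auto.
      intros e [He| ->]; [apply coll_sym, (proj2 pD); auto| apply coll_sym; auto]. }
    assert (caD : coll a Dp) by auto.
    assert (allD : forall x, l x -> coll Dp x).
    { apply (oa_two Dp l k a DDp Hl lk la nka); apply coll_sym; auto. }
    destruct (classic (Dp = R)) as [->|nDR].
    + apply nAR, coll_sym; auto.
    + assert (DB : D B) by exact (lin_D l B Hl lB).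
      assert (cBC : coll B C).
      { apply (oa_two B N Dp R DB HN NDp NR nDR); auto; apply coll_sym; auto. }
      assert (DC : D C) by exact (lin_D m C Hm mC).
      assert (cCk : coll C k).
      { apply (oa_two C l A B DC Hl lA lB nAB); auto.
        - apply (coll_L m); auto.
        - apply coll_sym; auto. }
      apply nkQ. apply (oa_two k m C A Dk Hm mC mA nCA); auto.
      * apply coll_sym; auto.
      * apply (coll_L l); auto.
Qed.


Variable n : nat.
Hypothesis RB : forall X k, singular Ln D X -> chain X k -> k <= n.
Hypothesis n2 : 2 <= n.

Lemma rbS Z : singular Ln D Z -> rb Z n.
Proof. intros s j ch. exact (RB Z j s ch). Qed.

Lemma cge_weak X k j : cge X k -> j <= k -> cge X j.
Proof. intros [i [h1 h2]] h. exists i; split; auto; lia. Qed.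

Lemma HC_exists U W : sub U -> singular Ln D W -> subset U W -> exists j, chain U j.
Proof.
  intros sU sW UW.
  assert (Hm : forall m, (exists j, chain U j) \/ exists V, sub V /\ subset V U /\ chain V m).
  { induction m as [|m IH].
    - right. exists (fun _ => False). split; [apply sub_empty|split; [intros x []|]].
      apply chain_empty; auto.
    - destruct IH as [h|[V [sV [VU chV]]]]; [left; auto|].
      destruct (classic (exists x, U x /\ ~ V x)) as [[x [Ux nVx]]|nE].
      + right. exists (span (add V x)).
        assert (aD : subset (add V x) D).
        { intros e [He| ->]; apply (sub_D_of U); auto. }
        split; [apply span_sub; auto|split].
        * apply span_min; auto. intros e [He| ->]; auto.
        * apply (chain_extend V _ m x); auto.
          -- apply span_sub; auto.
          -- intros e He; apply span_incl; left; auto.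
          -- apply span_incl; right; auto.
      + left. exists m. apply (chain_ext V); auto. intros x; split; auto.
        intros Ux. apply NNPP; intros nVx; apply nE; exists x; auto. }
  destruct (Hm (S n)) as [h|[V [sV [VU chV]]]]; auto.
  exfalso. assert (S n <= n); [|lia].
  apply (RB V); auto. apply (sing_sub W); auto. intros x Hx; auto.
Qed.

Lemma maxperp Y z : singular Ln D Y -> chain Y n -> D z -> (forall y, Y y -> coll y z) -> Y z.
Proof.
  intros sY chY Dz Hz. apply NNPP. intros nYz.
  assert (aD : subset (add Y z) D).
  { intros e [He| ->]; auto. apply (sub_D_of Y); auto. destruct sY; auto. }
  assert (sg : singular Ln D (span (add Y z))).
  { apply sing_span; auto. intros x y [Hx| ->] [Hy| ->].
    - apply (proj2 sY); auto.
    - auto.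
    - apply coll_sym; auto.
    - apply coll_refl. }
  assert (S n <= n); [|lia].
  apply (RB _ (S n) sg). apply (chain_extend Y _ n z); auto.
  - destruct sg; auto.
  - intros e He; apply span_incl; left; auto.
  - apply span_incl; right; auto.
Qed.

Lemma E X W : singular Ln D X -> singular Ln D W -> chain W n ->
  exists Y, singular Ln D Y /\ chain Y n /\ subset X Y.
Proof.
  intros sX.
  assert (P : forall d W, singular Ln D W -> chain W n -> cge (inter W X) (n - d) ->
            exists Y, singular Ln D Y /\ chain Y n /\ subset X Y).
  { induction d as [|d IH]; intros W0 sW chW cW;
    (destruct (classic (forall x, X x -> W0 x)) as [XW|nXW];
      [exists W0; auto|]);
    apply not_all_ex_not in nXW; destruct nXW as [x nx];
    apply imply_to_and in nx; destruct nx as [Xx nWx];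
    assert (Dx : D x) by (apply (sub_D_of X); auto; destruct sX; auto);
    set (Wx := inter W0 (pp x));
    assert (sWx : sub Wx) by (apply sub_inter; [destruct sW|apply pp_sub]; auto);
    assert (cWx : cge Wx (n - 1)) by
      (apply (L1 (pp x) W0); auto; [apply pp_sub; auto
       | apply meet_pp; auto
       | destruct sW; auto | intros e h; auto]);
    assert (aD : subset (add Wx x) D) by
      (intros e [He| ->]; auto; apply (sub_D_of Wx); auto);
    set (W2 := span (add Wx x));
    assert (sW2 : singular Ln D W2) by
      (apply sing_span; auto; intros p q [[Wp [_ cp]]| ->] [[Wq [_ cq]]| ->];
        [apply (proj2 sW); auto| apply coll_sym; auto| auto| apply coll_refl]);
    assert (chW2 : chain W2 n) by
      (apply cge_exact; [|apply rbS; auto];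
       replace n with (S (n - 1)) by lia;
       apply (cge_step Wx W2 (n - 1) x); auto;
       [destruct sW2; auto| intros e He; apply span_incl; left; auto
       | apply span_incl; right; auto| intros [h _]; auto]);
    assert (sI : sub (inter W2 X)) by (apply sub_inter; [destruct sW2|destruct sX]; auto);
    match type of cW with cge _ ?kk => assert (c2 : cge (inter W2 X) (S kk)) by
      (apply (cge_step (inter W0 X) _ _ x); auto;
       [intros e [We Xe]; split; auto; apply span_incl; left; split; auto; split;
         [apply (sub_D_of X); auto; destruct sX; auto| apply (proj2 sX); auto]
       | split; auto; apply span_incl; right; auto
       | intros [h _]; auto]) end.
    - exfalso. destruct c2 as [j [hj chj]].
      assert (j <= n); [|lia].
      apply (RB (inter W2 X)); auto. apply (sing_sub W2); auto. intros e [h _]; auto.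
    - apply (IH W2); auto. apply (cge_weak _ (S (n - S d))); auto. lia. }
  intros sW chW.
  assert (sI : sub (inter W X)) by (apply sub_inter; [destruct sW|destruct sX]; auto).
  destruct (HC_exists (inter W X) W sI sW) as [j chj]; [intros e [h _]; auto|].
  apply (P n W); auto. exists j; split; auto; lia.
Qed.


Lemma NM X : singular Ln D X -> chain X (n - 1) -> rb X (n - 1) ->
  forall Y1, singular Ln D Y1 -> chain Y1 n -> subset X Y1 ->
  exists q, D q /\ (forall x, X x -> coll x q) /\ ~ Y1 q.
Proof.
  intros sX chX rbX Y1 sY1 chY1 XY1.
  assert (subX : sub X) by (destruct sX; auto).
  assert (subY1 : sub Y1) by (destruct sY1; auto).
  destruct (classic (exists y, Y1 y /\ ~ X y)) as [[y [Y1y nXy]]|nE].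
  2:{ exfalso. destruct (cge_mono Y1 X n (chain_cge _ _ chY1) subX) as [j [hj chj]].
      - intros e He. apply NNPP; intros nx; apply nE; exists e; auto.
      - specialize (rbX j chj). lia. }
  assert (Dy : D y) by (apply (sub_D_of Y1); auto).
  destruct (ND y Dy) as [w [Dw nyw]].
  assert (nY1w : ~ Y1 w) by (intros h; apply nyw, (proj2 sY1); auto).
  destruct (classic (forall x, X x -> coll x w)) as [Xw|nXw].
  { exists w; auto. }
  apply not_all_ex_not in nXw. destruct nXw as [x0 nx0].
  apply imply_to_and in nx0. destruct nx0 as [Xx0 nx0w].
  assert (Dx0 : D x0) by (apply (sub_D_of X); auto).
  set (K := inter X (pp w)).
  assert (subK : sub K) by (apply sub_inter; auto; apply pp_sub; auto).
  assert (KX : subset K X) by (intros e [h _]; auto).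
  assert (nKx0 : ~ K x0) by (intros [_ [_ h]]; apply nx0w, coll_sym; auto).
  assert (rbK : rb K (n - 2)).
  { apply (rb_strict K X (n - 2) x0); auto. replace (S (n - 2)) with (n - 1) by lia; auto. }
  assert (chK : chain K (n - 2)).
  { apply cge_exact; auto. replace (n - 2) with (n - 1 - 1) by lia.
    apply (L1 (pp w) X); auto; [apply pp_sub; auto| apply meet_pp; auto| intros e h; auto]. }
  set (A := inter Y1 (pp w)).
  assert (subA : sub A) by (apply sub_inter; auto; apply pp_sub; auto).
  assert (AY1 : subset A Y1) by (intros e [h _]; auto).
  assert (KA : subset K A) by (intros e [h1 h2]; split; auto).
  assert (cA : cge A (n - 1)).
  { apply (L1 (pp w) Y1); auto; [apply pp_sub; auto| apply meet_pp; auto| intros e h; auto]. }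
  assert (rbA : rb A (n - 1)).
  { apply (rb_strict A Y1 (n - 1) y); auto.
    - replace (S (n - 1)) with n by lia. apply rbS; auto.
    - intros [_ [_ h]]. apply nyw, coll_sym; auto. }
  destruct (classic (exists a, A a /\ ~ K a)) as [[a [Aa nKa]]|nE].
  2:{ exfalso. destruct (cge_mono A K (n - 1) cA subK) as [j [hj chj]].
      - intros e He. apply NNPP; intros nx; apply nE; exists e; auto.
      - specialize (rbK j chj). lia. }
  assert (nXa : ~ X a) by (intros h; apply nKa; split; auto; destruct Aa; auto).
  assert (Da : D a) by (apply (sub_D_of A); auto).
  assert (pKa : perp K a).
  { split; auto. intros e Ke. apply (proj2 sY1); auto. }
  assert (sK : singular Ln D K) by (apply (sing_sub X); auto).
  destruct (Res (n - 2) K sK chK rbK a pKa nKa) as [R [pR naR]].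
  assert (DR : D R) by exact (perp_D K R pR).
  assert (nAw : ~ A w) by (intros h; apply nY1w; auto).
  assert (aD1 : subset (add A w) D) by (intros e [h| ->]; auto; apply (sub_D_of A); auto).
  set (Z := span (add A w)).
  assert (sZ : singular Ln D Z).
  { apply sing_span; auto. intros p q [[Yp [_ cp]]| ->] [[Yq [_ cq]]| ->];
      [apply (proj2 sY1); auto| apply coll_sym; auto| auto| apply coll_refl]. }
  assert (subZ : sub Z) by (destruct sZ; auto).
  assert (AZ : subset A Z) by (intros e h; apply span_incl; left; auto).
  assert (Zw : Z w) by (apply span_incl; right; auto).
  assert (chZ : chain Z n).
  { apply cge_exact; [|apply rbS; auto]. replace n with (S (n - 1)) by lia.
    apply (cge_step A Z (n - 1) w); auto. }
  assert (ZY1 : forall z, Z z -> Y1 z -> A z).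
  { intros z Zz Yz. split; auto. split; [apply (sub_D_of Z); auto|]. apply (proj2 sZ); auto. }
  set (C := inter Z (pp R)).
  assert (subC : sub C) by (apply sub_inter; auto; apply pp_sub; auto).
  assert (CZ : subset C Z) by (intros e [h _]; auto).
  assert (cC : cge C (n - 1)).
  { apply (L1 (pp R) Z); auto; [apply pp_sub; auto| apply meet_pp; auto| intros e h; auto]. }
  assert (KC : subset K C).
  { intros e Ke. split; [apply AZ, KA; auto|]. split; [apply (sub_D_of K); auto|].
    apply coll_sym, (proj2 pR); auto. }
  assert (nZR : ~ Z R) by (intros h; apply naR, (proj2 sZ); auto).
  destruct (classic (exists c, C c /\ ~ A c)) as [[c [Cc nAc]]|nE].
  2:{ exfalso. assert (AC : subset A C).
      { apply (eq_top C A (n - 1)); auto.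
        intros e He. apply NNPP; intros nx; apply nE; exists e; auto. }
      destruct (AC a Aa) as [_ [_ h]]. apply naR, coll_sym; auto. }
  assert (nY1c : ~ Y1 c) by (intros h; apply nAc, ZY1; auto; apply CZ; auto).
  assert (Dc : D c) by (apply (sub_D_of C); auto).
  assert (aD2 : subset (add C R) D) by (intros e [h| ->]; auto; apply (sub_D_of C); auto).
  set (V := span (add C R)).
  assert (sV : singular Ln D V).
  { apply sing_span; auto. intros p q [[Zp [_ cp]]| ->] [[Zq [_ cq]]| ->];
      [apply (proj2 sZ); auto| apply coll_sym; auto| auto| apply coll_refl]. }
  assert (subV : sub V) by (destruct sV; auto).
  assert (CV : subset C V) by (intros e h; apply span_incl; left; auto).
  assert (VR : V R) by (apply span_incl; right; auto).
  assert (chV : chain V n).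
  { apply cge_exact; [|apply rbS; auto]. replace n with (S (n - 1)) by lia.
    apply (cge_step C V (n - 1) R); auto; intros h; apply nZR, CZ; auto. }
  set (F := inter V (pp x0)).
  assert (subF : sub F) by (apply sub_inter; auto; apply pp_sub; auto).
  assert (cF : cge F (n - 1)).
  { apply (L1 (pp x0) V); auto; [apply pp_sub; auto| apply meet_pp; auto| intros e h; auto]. }
  destruct (classic (exists d, F d /\ ~ K d)) as [[d [[Vd [Dd cx0d]] nKd]]|nE].
  2:{ exfalso. destruct (cge_mono F K (n - 1) cF subK) as [j [hj chj]].
      - intros e He. apply NNPP; intros nx; apply nE; exists e; auto.
      - specialize (rbK j chj). lia. }
  assert (aD3 : subset (add K x0) D) by (intros e [h| ->]; auto; apply (sub_D_of K); auto).
  assert (XK : forall x, X x -> span (add K x0) x).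
  { apply (eq_top _ X (n - 1)); auto.
    - apply span_min; auto. intros e [h| ->]; auto.
    - replace (n - 1) with (S (n - 2)) by lia.
      apply (cge_step K _ (n - 2) x0); auto.
      + exists (n - 2); split; auto.
      + apply span_sub; auto.
      + intros e h; apply span_incl; left; auto.
      + apply span_incl; right; auto. }
  assert (dX : forall x, X x -> coll x d).
  { intros x Xx. apply coll_sym. apply (coll_span (add K x0) d Dd); auto.
    intros e [Ke| ->].
    - apply (proj2 sV); auto; apply CV, KC; auto.
    - apply coll_sym; auto. }
  destruct (classic (Y1 d)) as [Y1d|nY1d]; [|exists d; auto].
  exfalso.
  assert (AR : forall e, A e -> coll R e -> K e).
  { intros e Ae cRe. apply NNPP; intros nKe.
    assert (sAR : sub (inter A (pp R))) by (apply sub_inter; auto; apply pp_sub; auto).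
    assert (HAR : subset A (inter A (pp R))).
    { apply (eq_top _ A (n - 1)); auto.
      - intros u [h _]; auto.
      - replace (n - 1) with (S (n - 2)) by lia.
        apply (cge_step K _ (n - 2) e); auto.
        + exists (n - 2); split; auto.
        + intros u Ku. split; auto. apply coll_sym in Ku || idtac.
          split; [apply (sub_D_of K); auto| apply coll_sym, (proj2 pR); auto].
        + split; auto. split; auto. apply (sub_D_of A); auto. }
    destruct (HAR a Aa) as [_ [_ h]]. apply naR, coll_sym; auto. }
  assert (nAd : ~ A d) by (intros h; apply nKd, AR; auto; apply (proj2 sV); auto).
  assert (aD4 : subset (add A d) D) by (intros e [h| ->]; auto; apply (sub_D_of A); auto).
  assert (Y1s : forall z, Y1 z -> span (add A d) z).
  { apply (eq_top _ Y1 n); auto.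
    - apply span_min; auto. intros e [h| ->]; auto.
    - replace n with (S (n - 1)) by lia.
      apply (cge_step A _ (n - 1) d); auto.
      + apply span_sub; auto.
      + intros e h; apply span_incl; left; auto.
      + apply span_incl; right; auto.
    - apply rbS; auto. }
  apply nY1c. apply (maxperp Y1 c); auto.
  intros z Yz. apply coll_sym. apply (coll_span (add A d) c Dc); auto.
  intros e [Ae| ->].
  - apply (proj2 sZ); auto; apply CZ; auto.
  - apply (proj2 sV); auto.
Qed.

End Gen.

Section Bridge.
Context {Pt : Type} (Ln : (Pt -> Prop) -> Prop) (H : Pt -> Prop).
Let T := fun _ : Pt => True.
Hypothesis subH : subspace Ln T H.

Lemma B_lin L : lineIn Ln H L -> lineIn Ln T L.
Proof. intros [h _]; split; auto; intros x _; exact I. Qed.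

Lemma B_lin2 L x y : lineIn Ln T L -> L x -> L y -> x <> y -> H x -> H y -> lineIn Ln H L.
Proof.
  intros HL Lx Ly nxy Hx Hy. split; [destruct HL; auto|].
  intros z Lz. apply (proj2 subH L HL); auto. exists x, y; auto.
Qed.

Lemma B_coll x y : collinear Ln H x y -> collinear Ln T x y.
Proof. intros [->|[L [HL h]]]; [left; auto| right; exists L; split; auto; apply B_lin; auto]. Qed.

Lemma B_coll2 x y : H x -> H y -> collinear Ln T x y -> collinear Ln H x y.
Proof.
  intros Hx Hy [->|[L [HL [Lx Ly]]]]; [left; auto|].
  destruct (classic (x = y)) as [->|nxy]; [left; auto|].
  right; exists L; split; auto. apply (B_lin2 L x y); auto.
Qed.

Lemma B_sub1 S : subspace Ln H S -> subspace Ln T S.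
Proof.
  intros [SH Hs]. split; [intros x _; exact I|].
  intros L HL [x [y [nxy [Lx [Ly [Sx Sy]]]]]].
  apply Hs; [apply (B_lin2 L x y); auto|exists x, y; auto].
Qed.

Lemma B_sub2 S : subspace Ln T S -> subset S H -> subspace Ln H S.
Proof.
  intros [_ Hs] SH. split; auto.
  intros L HL Hex. apply Hs; auto. apply B_lin; auto.
Qed.

Lemma B_chain1 X k : has_chain Ln H X k -> has_chain Ln T X k.
Proof.
  intros [f [h0 [hk [hs hi]]]]. exists f; split; [|split; [|split]]; auto.
  intros i Hi; apply B_sub1; auto.
Qed.

Lemma B_chain2 X k : subset X H -> has_chain Ln T X k -> has_chain Ln H X k.
Proof.
  intros XH [f [h0 [hk [hs hi]]]]. exists f; split; [|split; [|split]]; auto.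
  intros i Hi; apply B_sub2; auto.
  intros x fx. apply XH, hk. apply (fchain_mono f k (fun j hj => proj1 (hi j hj)) i k); auto.
Qed.

Lemma B_sing1 S : singular Ln H S -> singular Ln T S /\ subset S H.
Proof.
  intros [sS c]. split; [split|].
  - apply B_sub1; auto.
  - intros x y Sx Sy; apply B_coll; auto.
  - destruct sS; auto.
Qed.

Lemma B_sing2 S : singular Ln T S -> subset S H -> singular Ln H S.
Proof.
  intros [sS c] SH. split; [apply B_sub2; auto|].
  intros x y Sx Sy; apply B_coll2; auto.
Qed.

Lemma B_k1 k Z : k_subspace Ln H k Z -> k_subspace Ln T k Z /\ subset Z H.
Proof.
  intros [s [c nc]]. destruct (B_sing1 Z s) as [s' ZH].
  split; auto. split; auto. split; [apply B_chain1; auto|].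
  intros h; apply nc, B_chain2; auto.
Qed.

Lemma B_k2 k Z : k_subspace Ln T k Z -> subset Z H -> k_subspace Ln H k Z.
Proof.
  intros [s [c nc]] ZH. split; [apply B_sing2; auto|split; [apply B_chain2; auto|]].
  intros h; apply nc, B_chain1; auto.
Qed.

Lemma B_ps : polar_space Ln T -> polar_space Ln H.
Proof.
  intros [P1 [P2 P3]]. split; [|split].
  - intros L HL. apply P1, B_lin; auto.
  - intros L M x y HL HM. apply P2; apply B_lin; auto.
  - intros p L Hp HL. assert (LH : forall x, L x -> H x) by (destruct HL; auto).
    destruct (P3 p L I (B_lin L HL)) as [h|[x [[Lx cx] U]]].
    + left. intros x Lx. apply B_coll2; auto.
    + right. exists x. split; [split; auto; apply B_coll2; auto|].
      intros y [Ly cy]. apply U; split; auto. apply B_coll; auto.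
Qed.

End Bridge.

Theorem mainTheorem14 (Pt : Type) (Ln : (Pt -> Prop) -> Prop) (n : nat)
  (H : Pt -> Prop) :
  let T := fun _ : Pt => True in
  polar_space Ln T -> nondegenerate Ln T -> has_rank Ln T n -> 2 <= n ->
  no_thin_lines Ln T ->
  hyperplane Ln T H -> nondegenerate Ln H -> has_rank Ln H n ->
  generates (dual_lines Ln T n) (dual_points Ln T n)
    (fun Z => k_subspace Ln T n Z /\ subset Z H) /\
  (forall A, generates (dual_lines Ln H n) (dual_points Ln H n) A ->
     exists B, generates (dual_lines Ln T n) (dual_points Ln T n) B /\
               card_le B A).
Proof.
  intros T PST NDT RT n2 _ HypH NDH RH. subst T.
  destruct HypH as [subH [_ meetH]].
  assert (PSH := B_ps Ln H subH PST).
  destruct RT as [_ RBT]. destruct RH as [[W kW] RBH].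
  assert (P1 : forall S, subspace (dual_lines Ln (fun _ => True) n) (dual_points Ln (fun _ => True) n) S ->
     subset (fun Z => k_subspace Ln (fun _ => True) n Z /\ subset Z H) S ->
     subset (dual_points Ln (fun _ => True) n) S).
  { intros S HS HSH M kM.
    destruct (classic (subset M H)) as [MH|nMH]; [apply HSH; auto|].
    assert (em : exists m, M m /\ ~ H m).
    { apply NNPP; intros ne; apply nMH; intros x Mx; apply NNPP; intros nx; apply ne; exists x; auto. }
    destruct em as [m [Mm nHm]].
    destruct kM as [sM [chM nchM]].
    set (X := inter M H).
    assert (XH : subset X H) by (intros e [_ h]; auto).
    assert (XM : subset X M) by (intros e [h _]; auto).
    assert (subM : subspace Ln (fun _ => True) M) by (destruct sM; auto).
    assert (subX : subspace Ln (fun _ => True) X) by (apply sub_inter; auto).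
    assert (cX : cge Ln (fun _ => True) X (n - 1)).
    { apply (L1 Ln (fun _ => True) H M); auto; try (intros L HL _; apply meetH; auto); try (intros e h; auto). }
    assert (rbX : rb Ln (fun _ => True) X (n - 1)).
    { apply (rb_strict Ln _ X M (n - 1) m); auto;
      try (replace (Datatypes.S (n - 1)) with n by lia; apply (rbS Ln _ n RBT); auto);
      try (intros [_ h]; auto). }
    assert (chX : has_chain Ln (fun _ => True) X (n - 1)) by (apply cge_exact; auto).
    assert (sXT : singular Ln (fun _ => True) X) by (apply (sing_sub Ln _ M); auto).
    assert (sXH : singular Ln H X) by (apply (B_sing2 Ln H subH); auto).
    assert (chXH : has_chain Ln H X (n - 1)) by (apply (B_chain2 Ln H); auto).
    assert (rbXH : rb Ln H X (n - 1)) by (intros j hj; apply rbX, (B_chain1 Ln H subH); auto).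
    destruct kW as [sW [chW _]].
    destruct (E Ln H PSH n RBH n2 X W sXH sW chW) as [Y1 [sY1 [chY1 XY1]]].
    destruct (NM Ln H PSH NDH n RBH n2 X sXH chXH rbXH Y1 sY1 chY1 XY1) as [q [Hq [Xq nY1q]]].
    assert (aD : subset (add X q) H) by (intros e [h| ->]; auto).
    set (Y2 := span Ln H (add X q)).
    assert (sY2 : singular Ln H Y2).
    { apply sing_span; auto. intros p r [Xp| ->] [Xr| ->].
      - apply (proj2 sXH); auto.
      - auto.
      - apply coll_sym; auto.
      - apply coll_refl. }
    assert (chY2 : has_chain Ln H Y2 n).
    { apply cge_exact; [|apply (rbS Ln H n RBH); auto]. replace n with (Datatypes.S (n - 1)) by lia.
      apply (cge_step Ln H X Y2 (n - 1) q).
      - exists (n - 1); split; auto.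
      - destruct sY2; auto.
      - intros e h; apply span_incl; left; auto.
      - apply span_incl; right; auto.
      - intros h; apply nY1q; auto. }
    assert (kH : forall Y, singular Ln H Y -> has_chain Ln H Y n -> k_subspace Ln H n Y).
    { intros Y sY chY. split; auto. split; auto. intros h. specialize (RBH Y (Datatypes.S n) sY h). lia. }
    destruct (B_k1 Ln H subH n Y1 (kH Y1 sY1 chY1)) as [kY1 Y1H].
    destruct (B_k1 Ln H subH n Y2 (kH Y2 sY2 chY2)) as [kY2 Y2H].
    assert (kX : k_subspace Ln (fun _ => True) (n - 1) X).
    { split; auto. split; auto. intros h. specialize (rbX _ h). lia. }
    set (Lam := fun Z => k_subspace Ln (fun _ => True) n Z /\ subset X Z).
    apply (proj2 HS Lam).
    - split.
      + exists X. split; auto. intros Z; unfold Lam; tauto.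
      + intros Z [h _]; exact h.
    - exists Y1, Y2. split; [|split; [|split; [|split]]].
      + intros E12. apply nY1q. rewrite E12. apply span_incl; right; auto.
      + split; auto.
      + split; auto. intros e h; apply span_incl; left; auto.
      + apply HSH; auto.
      + apply HSH; auto.
    - split; [split; auto|auto]. }
  split.
  - split; [intros Z [h _]; exact h|]. intros S HS HSH. apply P1; auto.
  - intros A [AH GA]. exists A. split.
    + split.
      * intros Z AZ. exact (proj1 (B_k1 Ln H subH n Z (AH Z AZ))).
      * intros S HS HAS. apply P1; auto.
        set (S' := fun Z => S Z /\ k_subspace Ln H n Z).
        assert (sub' : subspace (dual_lines Ln H n) (dual_points Ln H n) S').
        { split; [intros Z [_ h]; exact h|].
          intros Lam [[X [kX HLam]] LamD] [Z1 [Z2 [n12 [L1' [L2' [[S1 _] [S2 _]]]]]]].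
          set (LT := fun Z => k_subspace Ln (fun _ => True) n Z /\ subset X Z).
          assert (XH : subset X H) by exact (proj2 (B_k1 Ln H subH _ X kX)).
          assert (HLT : subset LT S).
          { apply (proj2 HS LT).
            - split; [|intros Z [h _]; exact h]. exists X. split; [exact (proj1 (B_k1 Ln H subH _ X kX))|].
              intros Z; unfold LT; tauto.
            - exists Z1, Z2. split; auto.
              apply HLam in L1'. apply HLam in L2'. destruct L1' as [k1 x1]. destruct L2' as [k2 x2].
              split; [split; auto; exact (proj1 (B_k1 Ln H subH _ _ k1))|].
              split; [split; auto; exact (proj1 (B_k1 Ln H subH _ _ k2))|]. auto. }
          intros Z LZ. apply HLam in LZ. destruct LZ as [kZ XZ]. split; auto.
          apply HLT. split; auto. exact (proj1 (B_k1 Ln H subH _ _ kZ)). }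
        intros Z [kZ ZH]. assert (S' Z) by (apply (GA S' sub'); [intros U AU; split; [apply HAS; auto| apply AH; auto]| apply (B_k2 Ln H subH); auto]).
        destruct H0; auto.
    + exists (fun x => x). split; auto.
Qed.
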